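(* Let $K$ be an algebraically closed field of characteristic zero, $\deg_1$ the standard homogeneous degree on $K[x_1,\dots,x_n]$, $\Phi=(f_1,\dots,f_n)$ a polynomial automorphism of $K^n$, $d_i=\deg_1(f_i)$, $\deg_2$ the weighted degree with weights $d_i$ on $x_i$, and $I=\{Q : Q(\overline{f_1},\dots,\overline{f_n})=0\}$. If $P\in K[x_1,\dots,x_n]$ satisfies $\deg_1(P\circ\Phi)=1$, then $\tilde P\in I$ unless $P$ is affine, i.e. $\deg_1(P)\le 1$.
   Context: $\overline{f}$ denotes the homogeneous component of highest degree of $f$, and $\tilde P$ denotes the leading term of $P$ with respect to $\deg_2$. *)

(* Defs.v *)
From mathcomp Require Import all_boot all_order all_algebra.
From mathcomp Require Import mpoly.
Set Implicit Arguments. Unset Strict Implicit. Unset Printing Implicit Defensive.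
Import GRing.Theory.
Local Open Scope ring_scope.

Definition wdeg (n : nat) (w : 'I_n -> nat) (m : 'X_{1..n}) : nat :=
  (\sum_(i < n) w i * m i)%N.

Definition wtop (R : ringType) (n : nat) (w : 'I_n -> nat) (p : {mpoly R[n]})
  : {mpoly R[n]} :=
  \sum_(m <- msupp p | wdeg w m == (\max_(m' <- msupp p) wdeg w m')%N)
     p@_m *: 'X_[m].

(* standard degree deg_1 (defined for nonzero p); msize p = deg_1 p + 1 *)
Definition deg1 (R : ringType) (n : nat) (p : {mpoly R[n]}) : nat := (msize p).-1.

Definition hbar (R : ringType) (n : nat) (p : {mpoly R[n]}) : {mpoly R[n]} :=
  wtop (fun _ => 1%N) p.

Definition poly_aut (R : ringType) (n : nat) (Phi : n.-tuple {mpoly R[n]}) : Prop :=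
  exists G : n.-tuple {mpoly R[n]},
    (forall i : 'I_n, tnth Phi i \mPo G = 'X_i) /\
    (forall i : 'I_n, tnth G i \mPo Phi = 'X_i).

Definition hbar_tuple (R : ringType) (n : nat) (Phi : n.-tuple {mpoly R[n]})
  : n.-tuple {mpoly R[n]} := [tuple hbar (tnth Phi i) | i < n].

Definition in_I (R : comRingType) (n : nat) (Phi : n.-tuple {mpoly R[n]})
  (Q : {mpoly R[n]}) : Prop := Q \mPo hbar_tuple Phi = 0.

Definition deg2_weights (R : ringType) (n : nat) (Phi : n.-tuple {mpoly R[n]})
  : 'I_n -> nat := fun i => deg1 (tnth Phi i).

(* Main.v *)
Require Import Defs.
From mathcomp Require Import all_boot all_order all_algebra.
From mathcomp Require Import mpoly.
From mathcomp Require Import ring zify.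
Set Implicit Arguments. Unset Strict Implicit. Unset Printing Implicit Defensive.
Import GRing.Theory.
Local Open Scope ring_scope.

Section Aux.
Context (n : nat) (R : idomainType).
Implicit Types (p q : {mpoly R[n]}).

Local Notation ph := (pihomog mdeg).

Lemma homog_msize_le d p : p \is d.-homog -> (msize p <= d.+1)%N.
Proof.
move/dhomogP=> h; rewrite msizeE; apply/bigmax_leqP_seq => m /h -> //.
Qed.

Lemma ph_small k p : (msize p <= k)%N -> ph k p = 0.
Proof.
move=> hk; rewrite pihomogE big_seq_cond big_pred0 // => m.
apply/negbTE; rewrite negb_and; case: (boolP (m \in msupp p)) => //= hm.
move: (msize_mdeg_lt hm) => lt; apply/eqP => e; move: lt; rewrite e.
by move=> lt; move: (leq_trans lt hk); rewrite ltnn.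
Qed.

Lemma msizeM_le2 p q : (msize (p * q) <= (msize p + msize q).-1)%N.
Proof.
have [->|nz_p] := eqVneq p 0; first by rewrite mul0r msize0.
have [->|nz_q] := eqVneq q 0; first by rewrite mulr0 msize0.
by rewrite msizeM.
Qed.

Lemma lower_part a p : (msize p <= a.+1)%N -> (msize (p - ph a p) <= a)%N.
Proof.
move=> h; rewrite {1}(pihomog_partitionE h) big_ord_recr /= addrK.
apply: (leq_trans (msize_sum _ _ _)); apply/bigmax_leqP => i _.
exact: (leq_trans (homog_msize_le (pihomogP _ _ _))).
Qed.

Lemma prodL a b p q : (msize p <= a.+1)%N -> (msize q <= b.+1)%N ->
  (msize (p * q) <= (a + b).+1)%N /\ ph (a + b) (p * q) = ph a p * ph b q.
Proof.
move=> hp hq; split.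
  apply: (leq_trans (msizeM_le2 _ _)).
  lia.
have hp' := lower_part hp; have hq' := lower_part hq.
have h1 := homog_msize_le (pihomogP mdeg a p).
set pa := ph a p in hp' h1 *; set qb := ph b q in hq' *.
have -> : p * q = pa * qb + (pa * (q - qb) + (p - pa) * q) by ring.
rewrite pihomogD (pihomog_dE (dhomogM (pihomogP _ _ _) (pihomogP _ _ _))).
rewrite (@ph_small (a + b)%N (pa * (q - qb) + (p - pa) * q)) ?addr0 //.
apply: (leq_trans (msizeD_le _ _)); rewrite geq_max; apply/andP; split.
  apply: (leq_trans (msizeM_le2 _ _)).
  lia.
apply: (leq_trans (msizeM_le2 _ _)); lia.
Qed.


Lemma ph01 : ph 0 (1 : {mpoly R[n]}) = 1.
Proof. by apply: pihomog_dE; apply: dhomog1. Qed.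

Lemma powL e (f : {mpoly R[n]}) k : (msize f <= e.+1)%N ->
  (msize (f ^+ k) <= (e * k).+1)%N /\ ph (e * k) (f ^+ k) = (ph e f) ^+ k.
Proof.
move=> hf; elim: k => [|k [IH1 IH2]].
  by rewrite !expr0 muln0 ph01; split=> //; rewrite msize1.
have [h1 h2] := prodL hf IH1.
by rewrite !exprS mulnS; split => //; rewrite h2 IH2.
Qed.

Lemma monoLs (F : 'I_n -> {mpoly R[n]}) (e : 'I_n -> nat) (m : 'X_{1..n})
  (r : seq 'I_n) :
  (forall i, msize (F i) <= (e i).+1)%N ->
  (msize (\prod_(i <- r) F i ^+ m i) <= (\sum_(i <- r) e i * m i).+1)%N /\
  ph (\sum_(i <- r) e i * m i)%N (\prod_(i <- r) F i ^+ m i)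
    = \prod_(i <- r) (ph (e i) (F i)) ^+ m i.
Proof.
move=> hF; elim: r => [|i r [h1 h2]].
  by rewrite !big_nil ph01; split => //; rewrite msize1.
have [a1 a2] := powL (m i) (hF i).
have [b1 b2] := prodL a1 h1.
by rewrite !big_cons; split => //; rewrite b2 a2 h2.
Qed.

End Aux.

Lemma maxS (T : Type) (s : seq T) (F : T -> nat) :
  (\max_(x <- s) (F x).+1).-1 = \max_(x <- s) F x.
Proof.
elim: s => [|x s IH]; first by rewrite !big_nil.
rewrite !big_cons -IH; case: (\max_(j <- s) (F j).+1)%N => [|M] /=.
  by rewrite !maxn0.
by rewrite maxnSS.
Qed.

Lemma hbarE (R : idomainType) n (f : {mpoly R[n]}) :
  hbar f = pihomog mdeg (msize f).-1 f.
Proof.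
have wE : forall m : 'X_{1..n}, wdeg (fun _ => 1%N) m = mdeg m.
  move=> m; rewrite /wdeg; transitivity (\sum_i m i)%N; last by rewrite mdegE.
  by apply: eq_bigr => i _; rewrite mul1n.
rewrite /hbar /wtop pihomogE msizeE maxS.
apply: eq_bigl => m; rewrite wE; congr (_ == _).
by apply: eq_bigr => i _; rewrite wE.
Qed.

Theorem corollary3 (K : closedFieldType) (n : nat)
  (Phi : n.-tuple {mpoly K[n]}) (P : {mpoly K[n]}) :
  [pchar K] =i pred0 ->
  poly_aut Phi ->
  msize (P \mPo Phi) = 2%N ->
  ~ (msize P <= 2)%N ->
  in_I Phi (wtop (deg2_weights Phi) P).
Proof.
move=> _ [G [hPhi _]] hPP hP.
set w := deg2_weights Phi.
have wpos : forall i, (0 < w i)%N.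
  move=> i; rewrite /w /deg2_weights /deg1.
  case: ltnP => // h1; exfalso.
  have h2 : (msize (tnth Phi i) <= 1)%N by case: (msize _) h1 => // -[].
  have := hPhi i; rewrite (msize1_polyC h2) comp_mpolyC => /(congr1 (fun p => msize p)).
  by rewrite msizeC msizeX mdeg1; case: (_ != 0).
have hF : forall i, (msize (tnth Phi i) <= (w i).+1)%N by move=> i; exact: leqSpred.
set D := (\max_(m <- msupp P) wdeg w m)%N.
have key : pihomog mdeg D (P \mPo Phi) = wtop w P \mPo hbar_tuple Phi.
  rewrite comp_mpolyEX raddf_sum /wtop -/D raddf_sum /= [RHS]big_mkcond.
  rewrite [LHS]big_seq [RHS]big_seq.
 apply: eq_bigr => m hm.
  rewrite linearZ /= comp_mpolyX.
  have [a1 a2] := monoLs m (index_enum 'I_n) hF.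
  have hle : (wdeg w m <= D)%N by exact: (leq_bigmax_seq _ hm).
  case: ifP => [/eqP hD|hne].
    rewrite comp_mpolyZ comp_mpolyX -hD; congr (_ *: _).
    rewrite [X in X = _]a2; apply: eq_bigr => i _.
    by rewrite tnth_mktuple hbarE.
  rewrite ph_small ?scaler0 //.
  apply: (leq_trans a1); rewrite ltn_neqAle hle andbT.
  by rewrite hne.
rewrite /in_I; apply/eqP; apply: contraT => hne.
rewrite -key in hne.
have hD : (D < 2)%N.
  rewrite -hPP ltnNge; apply: contra hne => h.
  by rewrite ph_small.
case: hP; rewrite msizeE; apply/bigmax_leqP_seq => m hm _.
have h1 : (wdeg w m <= D)%N by exact: (leq_bigmax_seq _ hm).
rewrite ltnS; apply: (@leq_trans (wdeg w m)); last by lia.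
rewrite mdegE /wdeg; apply: leq_sum => i _; exact: leq_pmull.
Qed.
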